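(* Let $\mathcal{D}$ be a dyadic grid and $f$ a positive function on $\mathbb{D}$. The following are equivalent: (1) $f$ is almost constant on dyadic $3/4$-top halves, i.e. there is $C\ge1$ with $f(z)\le Cf(\zeta)$ for all $z,\zeta\in T_{3/4}(I)$ and all $I\in\mathcal{D}$; (2) there is a constant $L$ such that $|\log f(z)-\log f(\zeta)|\le L(1+\beta_{\mathcal{D}}(z,\zeta))$ for all $z,\zeta\in\mathbb{D}$.
   Context: $\mathbb{D}$ is the open unit disc, $\mathbb{T}$ the unit circle, $|I|$ normalized arc length ($|\mathbb{T}|=1$). For $0<\rho\le1$, $T_\rho(I)=\{z\in\mathbb{D}: 1-\rho<\frac{1-|z|}{|I|}\le1,\ z/|z|\in I\}$ (with $z=0$ regarded as belonging to $T_\rho(\mathbb{T})$), and $T(I)=T_{1/2}(I)$. A dyadic grid of $\mathbb{T}$ is a collection $\mathcal{D}$ of half-open arcs with $\mathbb{T}\in\mathcal{D}$ such that for every $I\in\mathcal{D}$ the arcs of $\mathcal{D}$ of length $|I|$ partition $\mathbb{T}$ and $I=I_1\cup I_2$ with $I_1,I_2\in\mathcal{D}$ of equal length; the sets $T(I)$, $I\in\mathcal{D}$, then tile $\mathbb{D}$. For $z\in\mathbb{D}$ let $\mathcal{I}_z$ be the unique arc of $\mathcal{D}$ with $z\in T(\mathcal{I}_z)$; for $I,J\in\mathcal{D}$ let $P_{\mathcal{D}}(I,J)$ be the smallest arc of $\mathcal{D}$ containing both. The dyadic hyperbolic distance is $\beta_{\mathcal{D}}(z,\zeta)=\log_2\frac{|P_{\mathcal{D}}(\mathcal{I}_z,\mathcal{I}_\zeta)|}{\min\{|\mathcal{I}_z|,|\mathcal{I}_\zeta|\}}$.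 *)

(* Defs.v *)
From Stdlib Require Import Reals Lra ClassicalEpsilon.
Open Scope R_scope.

(* Points of the complex plane, z = x + i y represented as (x, y). *)
Definition pt : Type := (R * R)%type.

Definition modulus (z : pt) : R := sqrt (fst z ^ 2 + snd z ^ 2).

Definition in_disc (z : pt) : Prop := modulus z < 1.

Definition normalize (z : pt) : pt := (fst z / modulus z, snd z / modulus z).

Definition circ (t : R) : pt := (cos (2 * PI * t), sin (2 * PI * t)).

Definition on_circle (w : pt) : Prop := exists t, w = circ t.

(* A half-open arc of T, with normalized length arc_len (|T| = 1):
   the set { e^{2 pi i t} : arc_start <= t < arc_start + arc_len }. *)
Record arc : Type := mkarc { arc_start : R; arc_len : R }.

Definition valid_arc (I : arc) : Prop := 0 < arc_len I <= 1.

Definition arc_set (I : arc) (w : pt) : Prop :=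
  exists t, arc_start I <= t < arc_start I + arc_len I /\ w = circ t.

Definition arc_sub (I J : arc) : Prop := forall w, arc_set I w -> arc_set J w.

Definition arc_eq (I J : arc) : Prop := forall w, arc_set I w <-> arc_set J w.

(* T_rho(I) = { z in D : 1 - rho < (1-|z|)/|I| <= 1, z/|z| in I },
   with z = 0 regarded as belonging to T_rho(T) (for z = 0 the ratio
   condition forces |I| = 1, i.e. I = T). *)
Definition in_T (rho : R) (I : arc) (z : pt) : Prop :=
  in_disc z /\
  1 - rho < (1 - modulus z) / arc_len I <= 1 /\
  (z = (0, 0) \/ arc_set I (normalize z)).

Definition dyadic_grid (D : arc -> Prop) : Prop :=
  (forall I, D I -> valid_arc I) /\
  (exists a, D (mkarc a 1)) /\
  (forall I, D I ->
     (forall w, on_circle w -> exists J, D J /\ arc_len J = arc_len I /\ arc_set J w) /\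
     (forall J K, D J -> D K -> arc_len J = arc_len I -> arc_len K = arc_len I ->
        (exists w, arc_set J w /\ arc_set K w) -> arc_eq J K)) /\
  (forall I, D I -> exists I1 I2, D I1 /\ D I2 /\
     arc_len I1 = arc_len I / 2 /\ arc_len I2 = arc_len I / 2 /\
     (forall w, arc_set I w <-> arc_set I1 w \/ arc_set I2 w)) /\
  (forall I, D I -> exists n : nat, arc_len I = (/ 2) ^ n).

Definition arc_inhabited : inhabited arc := inhabits (mkarc 0 1).

(* I_z : the (unique up to parametrization) arc of D with z in T(I_z) *)
Definition Iz (D : arc -> Prop) (z : pt) : arc :=
  epsilon arc_inhabited (fun I => D I /\ in_T (1/2) I z).

Definition PD (D : arc -> Prop) (I J : arc) : arc :=
  epsilon arc_inhabited (fun P => D P /\ arc_sub I P /\ arc_sub J P /\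
     forall Q, D Q -> arc_sub I Q -> arc_sub J Q -> arc_sub P Q).

Definition log2 (x : R) : R := ln x / ln 2.

Definition betaD (D : arc -> Prop) (z zeta : pt) : R :=
  log2 (arc_len (PD D (Iz D z) (Iz D zeta)) /
        Rmin (arc_len (Iz D z)) (arc_len (Iz D zeta))).

(* Main.v *)
Require Import Defs.
From Stdlib Require Import Reals Lra Lia ZArith Classical ClassicalEpsilon.
Open Scope R_scope.

Lemma circ_eq_int (t s : R) : circ t = circ s -> exists k : Z, t - s = IZR k.
Proof.
  unfold circ; intros H. injection H as Hc Hs.
  assert (Hd : cos (2 * PI * (t - s)) = 1).
  { replace (2 * PI * (t - s)) with (2 * PI * t - 2 * PI * s) by ring.
    rewrite cos_minus, Hc, Hs.
    pose proof (sin2_cos2 (2 * PI * s)) as E. unfold Rsqr in E. lra. }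
  replace (2 * PI * (t - s)) with (2 * (PI * (t - s))) in Hd by ring.
  rewrite cos_2a_sin in Hd.
  assert (Hs0 : sin (PI * (t - s)) = 0) by nra.
  destruct (sin_eq_0_0 _ Hs0) as [k Hk]. exists k.
  pose proof PI_RGT_0.
  apply Rmult_eq_reg_l with PI; [|lra]. rewrite Hk. ring.
Qed.

Lemma circ_per_nat (t : R) (n : nat) : circ (t + INR n) = circ t.
Proof.
  unfold circ.
  replace (2 * PI * (t + INR n)) with (2 * PI * t + 2 * INR n * PI) by ring.
  now rewrite cos_period, sin_period.
Qed.

Lemma circ_per (t : R) (k : Z) : circ (t + IZR k) = circ t.
Proof.
  destruct (Z_le_gt_dec 0 k) as [Hk|Hk].
  - rewrite <- (Z2Nat.id k Hk), <- INR_IZR_INZ. apply circ_per_nat.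
  - assert (E : k = (- Z.of_nat (Z.to_nat (- k)))%Z) by lia.
    rewrite E, opp_IZR, <- INR_IZR_INZ.
    rewrite <- (circ_per_nat (t + - INR (Z.to_nat (- k))) (Z.to_nat (-k))).
    f_equal; ring.
Qed.

Lemma no_int_01 (k : Z) : 0 < IZR k -> IZR k < 1 -> False.
Proof. intros H1 H2. apply lt_IZR in H1. apply lt_IZR in H2. lia. Qed.

Lemma full_arc_contains (a : R) (w : pt) : on_circle w -> arc_set (mkarc a 1) w.
Proof.
  intros [t ->]. destruct (archimed (t - a)) as [H1 H2].
  exists (t + IZR (1 - up (t - a))%Z). cbn [arc_start arc_len]. split.
  - rewrite minus_IZR. simpl. lra.
  - symmetry. apply circ_per.
Qed.

Lemma arc_nonempty (I : arc) : valid_arc I -> arc_set I (circ (arc_start I)).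
Proof. intros [H1 H2]. exists (arc_start I). split; [lra | reflexivity]. Qed.

Lemma arc_on_circle (I : arc) w : arc_set I w -> on_circle w.
Proof. intros [t [_ ->]]. exists t; reflexivity. Qed.

Lemma arc_len_le (J K : arc) : valid_arc J -> valid_arc K -> arc_sub J K ->
  arc_len J <= arc_len K.
Proof.
  intros [HJ1 HJ2] [HK1 HK2] Hsub.
  destruct (Rle_or_lt (arc_len J) (arc_len K)) as [h|h]; [exact h|exfalso].
  destruct (Hsub _ (arc_nonempty J (conj HJ1 HJ2))) as [s0 [Hs0 E0]].
  destruct (circ_eq_int _ _ E0) as [n0 Hn0].
  set (t := arc_start J + (arc_start K + arc_len K - s0)).
  assert (Ht : arc_set J (circ t)).
  { exists t. split; [unfold t; lra | reflexivity]. }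
  destruct (Hsub _ Ht) as [s [Hs E]].
  destruct (circ_eq_int _ _ E) as [n1 Hn1].
  apply (no_int_01 (n1 - n0)); rewrite minus_IZR; unfold t in Hn1; lra.
Qed.

Lemma polar (x y : R) : x ^ 2 + y ^ 2 = 1 -> exists t, (x, y) = circ t.
Proof.
  intros H.
  assert (Hx : -1 <= x <= 1) by nra.
  pose proof (cos_acos x Hx) as Hc. pose proof (sin_acos x Hx) as Hs.
  assert (Hsq : sqrt (1 - x²) = Rabs y).
  { replace (1 - x²) with (Rsqr y) by (unfold Rsqr; lra). apply sqrt_Rsqr_abs. }
  pose proof PI_RGT_0.
  destruct (Rle_or_lt 0 y) as [hy|hy].
  - exists (acos x / (2 * PI)). unfold circ.
    replace (2 * PI * (acos x / (2 * PI))) with (acos x) by (field; lra).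
    rewrite Hc, Hs, Hsq, Rabs_pos_eq; auto.
  - exists (- acos x / (2 * PI)). unfold circ.
    replace (2 * PI * (- acos x / (2 * PI))) with (- acos x) by (field; lra).
    rewrite cos_neg, sin_neg, Hc, Hs, Hsq, Rabs_left; auto. f_equal; ring.
Qed.

Lemma modulus_ge0 z : 0 <= modulus z.
Proof. apply sqrt_pos. Qed.

Lemma modulus_scale (r a : R) : 0 <= r -> modulus (r * cos a, r * sin a) = r.
Proof.
  intros Hr. unfold modulus; cbn [fst snd].
  replace ((r * cos a) ^ 2 + (r * sin a) ^ 2) with (r * r).
  - apply sqrt_square; auto.
  - pose proof (sin2_cos2 a) as E. unfold Rsqr in E. nra.
Qed.

Lemma normalize_scale (r a : R) : 0 < r -> normalize (r * cos a, r * sin a) = (cos a, sin a).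
Proof.
  intros Hr. unfold normalize. rewrite modulus_scale by lra. simpl.
  f_equal; field; lra.
Qed.

Lemma modulus_pos z : z <> (0, 0) -> 0 < modulus z.
Proof.
  destruct z as [x y]; intros Hz. unfold modulus; simpl.
  apply sqrt_lt_R0.
  destruct (Req_dec x 0); destruct (Req_dec y 0); subst; try congruence; nra.
Qed.

Lemma normalize_on_circle z : z <> (0, 0) -> on_circle (normalize z).
Proof.
  intros Hz. pose proof (modulus_pos z Hz) as Hm.
  destruct z as [x y]. unfold normalize; simpl in *.
  apply polar.
  assert (E : modulus (x, y) * modulus (x, y) = x ^ 2 + y ^ 2).
  { unfold modulus; cbn [fst snd]. apply sqrt_sqrt. nra. }
  set (m := modulus (x, y)) in *. cbn [fst snd].
  replace ((x / m) ^ 2 + (y / m) ^ 2) with ((x ^ 2 + y ^ 2) / (m * m)) by (field; lra).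
  rewrite <- E. field. lra.
Qed.

Definition pointT (J : arc) : pt :=
  ((1 - 3/4 * arc_len J) * cos (2 * PI * arc_start J),
   (1 - 3/4 * arc_len J) * sin (2 * PI * arc_start J)).

Lemma pointT_in (J : arc) : valid_arc J -> in_T (1/2) J (pointT J).
Proof.
  intros [H1 H2]. unfold in_T, pointT, in_disc.
  rewrite modulus_scale by lra. split; [lra|]. split.
  - replace ((1 - (1 - 3 / 4 * arc_len J)) / arc_len J) with (3/4) by (field; lra). lra.
  - right. rewrite normalize_scale by lra. apply (arc_nonempty J). split; lra.
Qed.

Lemma half_pos n : 0 < (/2) ^ n.
Proof. apply pow_lt; lra. Qed.

Lemma half_split a b : (b <= a)%nat -> (/2) ^ a = (/2) ^ b * (/2) ^ (a - b).
Proof. intros H. rewrite <- pow_add. f_equal. lia. Qed.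

Lemma half_le1 k : (/2) ^ k <= 1.
Proof. induction k; simpl; [lra|]. pose proof (half_pos k). nra. Qed.

Lemma half_anti n m : (n <= m)%nat -> (/2) ^ m <= (/2) ^ n.
Proof.
  intros H. rewrite (half_split m n H). pose proof (half_pos n). pose proof (half_le1 (m - n)). nra.
Qed.

Lemma half_le_inv a b : (/2) ^ a <= (/2) ^ b -> (b <= a)%nat.
Proof.
  intros H. destruct (Nat.le_gt_cases b a) as [h|h]; [exact h|exfalso].
  pose proof (half_anti (S a) b h). simpl in H0. pose proof (half_pos a). lra.
Qed.

Lemma max_nat (P : nat -> Prop) (B : nat) :
  P 0%nat -> (forall n, P n -> (n <= B)%nat) -> exists n, P n /\ forall m, P m -> (m <= n)%nat.
Proof.
  intros H0 HB. apply NNPP; intros Hno.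
  assert (Hk : forall k, exists n, P n /\ (k <= n)%nat).
  { induction k as [|k [n [Hn Hkn]]]; [exists 0%nat; split; auto; lia|].
    destruct (classic (exists m, P m /\ (n < m)%nat)) as [[m [Hm Hnm]]|Hc].
    - exists m; split; auto; lia.
    - exfalso; apply Hno; exists n; split; auto.
      intros m Hm. destruct (Nat.le_gt_cases m n); auto. exfalso; apply Hc; eauto. }
  destruct (Hk (S B)) as [n [Hn Hle]]. apply HB in Hn. lia.
Qed.

Lemma grid_valid D : dyadic_grid D -> forall I, D I -> valid_arc I.
Proof. intros (Hv & _). exact Hv. Qed.

Lemma grid_pow D : dyadic_grid D -> forall I, D I -> exists n : nat, arc_len I = (/2) ^ n.
Proof. intros (_ & _ & _ & _ & Hp). exact Hp. Qed.

Lemma descend D : dyadic_grid D -> forall K, D K -> forall n w, arc_set K w ->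
  exists J, D J /\ arc_len J = arc_len K * (/2) ^ n /\ arc_set J w /\ arc_sub J K.
Proof.
  intros HD K HK n. destruct HD as (Hv & HT & Hp & Hh & Hpow).
  induction n as [|n IH]; intros w Hw.
  - exists K. repeat split; auto. simpl; ring. intros x; auto.
  - destruct (IH w Hw) as [J [HJ [HlJ [HwJ HJK]]]].
    destruct (Hh J HJ) as [I1 [I2 [HI1 [HI2 [L1 [L2 Hiff]]]]]].
    destruct (proj1 (Hiff w) HwJ) as [h|h].
    + exists I1. repeat split; auto.
      * rewrite L1, HlJ. simpl. field.
      * intros x Hx. apply HJK, Hiff. auto.
    + exists I2. repeat split; auto.
      * rewrite L2, HlJ. simpl. field.
      * intros x Hx. apply HJK, Hiff. auto.
Qed.

Lemma nest D : dyadic_grid D -> forall J K, D J -> D K -> arc_len J <= arc_len K ->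
  forall w, arc_set J w -> arc_set K w -> arc_sub J K.
Proof.
  intros HD J K HJ HK Hle w HwJ HwK.
  destruct (grid_pow D HD J HJ) as [a Ha]. destruct (grid_pow D HD K HK) as [b Hb].
  assert (Hba : (b <= a)%nat) by (apply half_le_inv; lra).
  destruct (descend D HD K HK (a - b) w HwK) as [J' [HJ' [Hl' [Hw' Hsub]]]].
  destruct HD as (Hv & HT & Hp & Hh & Hpow).
  destruct (Hp J HJ) as [_ Huniq].
  assert (Heq : arc_eq J J').
  { apply (Huniq J J'); auto. rewrite Hl', Hb, Ha. symmetry. apply half_split. auto.
    exists w; auto. }
  intros x Hx. apply Hsub, Heq, Hx.
Qed.

Lemma level_exists D : dyadic_grid D -> forall n (w : pt), on_circle w ->
  exists J, D J /\ arc_len J = (/2) ^ n /\ arc_set J w.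
Proof.
  intros HD n w Hw. pose proof HD as HD'. destruct HD' as (Hv & [a HT] & Hp & Hh & Hpow).
  destruct (descend D HD _ HT n (circ a)) as [J [HJ [Hl _]]].
  { apply full_arc_contains. exists a; reflexivity. }
  destruct (proj1 (Hp J HJ) w Hw) as [J' [HJ' [Hl' Hw']]].
  exists J'. repeat split; auto. rewrite Hl', Hl. simpl. ring.
Qed.

Lemma full_sub D : dyadic_grid D -> forall I K, D I -> D K -> arc_len K = 1 -> arc_sub I K.
Proof.
  intros HD I K HI HK H1 w Hw. destruct K as [a l]. simpl in H1. subst l.
  apply full_arc_contains. eapply arc_on_circle; eauto.
Qed.

Lemma div_bounds (r p : R) : 0 < p -> (r <= p <-> r / p <= 1) /\ (p < 2 * r <-> 1/2 < r / p).
Proof.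
  intros Hp. assert (E : p * / p = 1) by (field; lra).
  pose proof (Rinv_0_lt_compat p Hp). unfold Rdiv.
  split; split; intros; nra.
Qed.

Lemma Iz_exists D : dyadic_grid D -> forall z, in_disc z -> exists I, D I /\ in_T (1/2) I z.
Proof.
  intros HD z Hz. pose proof (modulus_ge0 z) as Hm. unfold in_disc in Hz.
  set (r := 1 - modulus z).
  assert (Hr : 0 < r <= 1) by (unfold r; lra).
  destruct (pow_lt_1_zero (/2) ltac:(rewrite Rabs_pos_eq; lra) r ltac:(lra)) as [N HN].
  destruct (max_nat (fun n => r <= (/2) ^ n) N) as [n [Hn Hmax]].
  - simpl; lra.
  - intros n Hn. destruct (Nat.le_gt_cases N n) as [h|h]; [|lia].
    specialize (HN n h). rewrite Rabs_pos_eq in HN by (apply Rlt_le, half_pos). lra.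
  - assert (Hn1 : (/2) ^ (S n) < r).
    { destruct (Rlt_or_le ((/2) ^ (S n)) r) as [h|h]; auto. apply Hmax in h. lia. }
    simpl in Hn1.
    assert (Hw : exists w, on_circle w /\ (z = (0,0) \/ w = normalize z)).
    { destruct (classic (z = (0,0))) as [h|h].
      - exists (circ 0). split; [exists 0; reflexivity|auto].
      - exists (normalize z). split; auto. apply normalize_on_circle; auto. }
    destruct Hw as [w [Hw Hwz]].
    destruct (level_exists D HD n w Hw) as [J [HJ [HlJ HwJ]]].
    exists J. split; auto. unfold in_T. split; [unfold in_disc; lra|].
    pose proof (half_pos n) as Hp.
    destruct (div_bounds r ((/2) ^ n) Hp) as [[A1 _] [A2 _]].
    rewrite HlJ. fold r. split; [split; [replace (1 - 1/2) with (1/2) by field; apply A2; lra| apply A1; lra]|].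
    destruct Hwz as [h|h]; [auto|right; subst w; auto].
Qed.

Lemma Iz_spec D : dyadic_grid D -> forall z, in_disc z -> D (Iz D z) /\ in_T (1/2) (Iz D z) z.
Proof.
  intros HD z Hz. unfold Iz. apply (epsilon_spec arc_inhabited (fun I => D I /\ in_T (1/2) I z)).
  apply Iz_exists; auto.
Qed.

Lemma PD_exists D : dyadic_grid D -> forall I J, D I -> D J ->
  exists P, D P /\ arc_sub I P /\ arc_sub J P /\
     forall Q, D Q -> arc_sub I Q -> arc_sub J Q -> arc_sub P Q.
Proof.
  intros HD I J HI HJ.
  destruct (grid_pow D HD I HI) as [nI HnI].
  destruct (max_nat (fun n => exists K, D K /\ arc_len K = (/2) ^ n /\ arc_sub I K /\ arc_sub J K) nI)
    as [n [[K [HK [HlK [HIK HJK]]]] Hmax]].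
  - pose proof HD as HD'. destruct HD' as (Hv & [a HT] & _).
    exists (mkarc a 1). repeat split; auto; apply (full_sub D HD); auto.
  - intros n [K [HK [HlK [HIK _]]]].
    apply half_le_inv. rewrite <- HlK, <- HnI.
    apply arc_len_le; auto; eapply grid_valid; eauto.
  - exists K. repeat split; auto.
    intros Q HQ HIQ HJQ.
    destruct (grid_pow D HD Q HQ) as [q Hq].
    assert (Hqn : (q <= n)%nat) by (apply Hmax; exists Q; auto).
    pose proof (arc_nonempty I (grid_valid D HD I HI)) as Hw.
    apply (nest D HD K Q HK HQ) with (circ (arc_start I)); auto.
    rewrite HlK, Hq. apply half_anti; auto.
Qed.

Lemma PD_spec D : dyadic_grid D -> forall I J, D I -> D J ->
  D (PD D I J) /\ arc_sub I (PD D I J) /\ arc_sub J (PD D I J) /\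
     forall Q, D Q -> arc_sub I Q -> arc_sub J Q -> arc_sub (PD D I J) Q.
Proof.
  intros HD I J HI HJ. unfold PD.
  apply (epsilon_spec arc_inhabited (fun P => D P /\ arc_sub I P /\ arc_sub J P /\
     forall Q, D Q -> arc_sub I Q -> arc_sub J Q -> arc_sub P Q)).
  apply PD_exists; auto.
Qed.

Lemma T_sub_same rho J K z : in_T rho J z -> arc_sub J K -> arc_len J = arc_len K -> in_T rho K z.
Proof.
  intros [H1 [H2 H3]] Hs Hl. unfold in_T. rewrite <- Hl. split; auto. split; auto.
  destruct H3; auto.
Qed.

Lemma T_half_3q J z : in_T (1/2) J z -> in_T (3/4) J z.
Proof. intros [H1 [H2 H3]]. split; auto. split; auto. lra. Qed.

Lemma T_half_parent J P z : valid_arc J -> in_T (1/2) J z -> arc_sub J P ->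
  arc_len P = 2 * arc_len J -> in_T (3/4) P z.
Proof.
  intros [V1 V2] [H1 [H2 H3]] Hs Hl. split; auto. split.
  - rewrite Hl. replace ((1 - modulus z) / (2 * arc_len J)) with (((1 - modulus z) / arc_len J) / 2)
      by (field; lra). lra.
  - destruct H3; auto.
Qed.

Lemma step_bound (D : arc -> Prop) (f : pt -> R) C :
  (forall z, in_disc z -> 0 < f z) -> 1 <= C ->
  (forall I, D I -> forall z zeta, in_T (3/4) I z -> in_T (3/4) I zeta -> f z <= C * f zeta) ->
  forall I z w, D I -> in_T (3/4) I z -> in_T (3/4) I w -> Rabs (ln (f z) - ln (f w)) <= ln C.
Proof.
  intros Hf HC H1 I z w HI Hz Hw.
  assert (fz : 0 < f z) by (apply Hf; apply Hz).
  assert (fw : 0 < f w) by (apply Hf; apply Hw).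
  assert (A : forall a b, 0 < a -> 0 < b -> a <= C * b -> ln a - ln b <= ln C).
  { intros a b Ha Hb Hab. assert (ln a <= ln (C * b)).
    { destruct (Rle_lt_or_eq_dec _ _ Hab) as [h|h].
      - left; apply ln_increasing; auto.
      - rewrite h; right; reflexivity. }
    rewrite ln_mult in H by lra. lra. }
  apply Rabs_le. split.
  - assert (ln (f w) - ln (f z) <= ln C) by (apply A; auto; apply (H1 I); auto). lra.
  - apply A; auto; apply (H1 I); auto.
Qed.

Lemma chain (D : arc -> Prop) (f : pt -> R) C :
  dyadic_grid D ->
  (forall z, in_disc z -> 0 < f z) -> 1 <= C ->
  (forall I, D I -> forall z zeta, in_T (3/4) I z -> in_T (3/4) I zeta -> f z <= C * f zeta) ->
  forall n K J z w, D K -> D J -> arc_sub J K -> arc_len J = arc_len K * (/2) ^ n ->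
  in_T (1/2) J z -> in_T (1/2) K w -> Rabs (ln (f z) - ln (f w)) <= INR (S n) * ln C.
Proof.
  intros HD Hf HC H1. pose proof (step_bound D f C Hf HC H1) as SB.
  induction n as [|n IH]; intros K J z w HK HJ HJK Hl Hz Hw.
  - simpl in Hl. rewrite Rmult_1_r in Hl. simpl. rewrite Rmult_1_l.
    apply (SB K); auto.
    + apply T_half_3q. eapply T_sub_same; eauto.
    + apply T_half_3q; auto.
  - pose proof (grid_valid D HD J HJ) as VJ.
    pose proof (arc_nonempty J VJ) as Hw0.
    destruct (descend D HD K HK n _ (HJK _ Hw0)) as [J' [HJ' [Hl' [Hw' HJ'K]]]].
    assert (Hl2 : arc_len J' = 2 * arc_len J).
    { rewrite Hl, Hl'. simpl. field. }
    assert (HJJ' : arc_sub J J').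
    { apply (nest D HD J J' HJ HJ') with (circ (arc_start J)); auto.
      destruct VJ; lra. }
    pose proof (pointT_in J' (grid_valid D HD J' HJ')) as Hz'.
    specialize (IH K J' (pointT J') w HK HJ' HJ'K Hl' Hz' Hw).
    assert (B : Rabs (ln (f z) - ln (f (pointT J'))) <= ln C).
    { apply (SB J'); auto.
      - apply (T_half_parent J); auto.
      - apply T_half_3q; auto. }
    replace (ln (f z) - ln (f w)) with ((ln (f z) - ln (f (pointT J'))) + (ln (f (pointT J')) - ln (f w))) by ring.
    eapply Rle_trans; [apply Rabs_triang|].
    rewrite (S_INR (S n)). lra.
Qed.

Lemma ln_le' x y : 0 < x -> x <= y -> ln x <= ln y.
Proof.
  intros Hx Hxy. destruct (Rle_lt_or_eq_dec _ _ Hxy) as [h|h].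
  - left; apply ln_increasing; auto.
  - rewrite h; right; reflexivity.
Qed.

Lemma ln2_pos : 0 < ln 2.
Proof. rewrite <- ln_1. apply ln_increasing; lra. Qed.

Lemma log_bound (m l1 lP : R) (k : nat) : 0 < m -> m <= l1 -> l1 = lP * (/2) ^ k ->
  INR k <= log2 (lP / m).
Proof.
  intros Hm Hml Hl.
  assert (E : lP = l1 * 2 ^ k).
  { rewrite Hl, Rmult_assoc, <- Rpow_mult_distr. replace (/2 * 2) with 1 by field. rewrite pow1. ring. }
  assert (H2k : 0 < 2 ^ k) by (apply pow_lt; lra).
  assert (Hr : 2 ^ k <= lP / m).
  { rewrite E. unfold Rdiv. assert (m * / m = 1) by (field; lra).
    pose proof (Rinv_0_lt_compat m Hm).
    assert (1 <= l1 * / m) by nra.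
    replace (l1 * 2 ^ k * / m) with (2 ^ k * (l1 * / m)) by ring. nra. }
  pose proof (ln_le' _ _ H2k Hr) as Hln. rewrite ln_pow in Hln by lra.
  unfold log2. pose proof ln2_pos.
  apply Rmult_le_reg_r with (ln 2); auto. unfold Rdiv. rewrite Rmult_assoc, Rinv_l by lra. lra.
Qed.

Lemma dir12 (D : arc -> Prop) (f : pt -> R) :
  dyadic_grid D -> (forall z, in_disc z -> 0 < f z) ->
  (exists C, 1 <= C /\
      forall I, D I -> forall z zeta, in_T (3/4) I z -> in_T (3/4) I zeta ->
        f z <= C * f zeta) ->
  (exists L, forall z zeta, in_disc z -> in_disc zeta ->
      Rabs (ln (f z) - ln (f zeta)) <= L * (1 + betaD D z zeta)).
Proof.
  intros HD Hf [C [HC H1]]. exists (2 * ln C). intros z zeta Hz Hzeta.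
  assert (Hc : 0 <= ln C) by (rewrite <- ln_1; apply ln_le'; lra).
  destruct (Iz_spec D HD z Hz) as [HI1 HzI1].
  destruct (Iz_spec D HD zeta Hzeta) as [HI2 HzI2].
  destruct (PD_spec D HD _ _ HI1 HI2) as [HP [S1 [S2 _]]].
  set (I1 := Iz D z) in *. set (I2 := Iz D zeta) in *. set (P := PD D I1 I2) in *.
  destruct (grid_pow D HD I1 HI1) as [a Ha].
  destruct (grid_pow D HD I2 HI2) as [b Hb].
  destruct (grid_pow D HD P HP) as [p Hp].
  assert (L1 : arc_len I1 <= arc_len P) by (apply arc_len_le; auto; eapply grid_valid; eauto).
  assert (L2 : arc_len I2 <= arc_len P) by (apply arc_len_le; auto; eapply grid_valid; eauto).
  assert (pa : (p <= a)%nat) by (apply half_le_inv; lra).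
  assert (pb : (p <= b)%nat) by (apply half_le_inv; lra).
  assert (E1 : arc_len I1 = arc_len P * (/2) ^ (a - p)) by (rewrite Ha, Hp; apply half_split; auto).
  assert (E2 : arc_len I2 = arc_len P * (/2) ^ (b - p)) by (rewrite Hb, Hp; apply half_split; auto).
  pose proof (pointT_in P (grid_valid D HD P HP)) as Hw.
  pose proof (chain D f C HD Hf HC H1 (a - p) P I1 z (pointT P) HP HI1 S1 E1 HzI1 Hw) as C1.
  pose proof (chain D f C HD Hf HC H1 (b - p) P I2 zeta (pointT P) HP HI2 S2 E2 HzI2 Hw) as C2.
  assert (Hmin : 0 < Rmin (arc_len I1) (arc_len I2)).
  { apply Rmin_glb_lt; [rewrite Ha|rewrite Hb]; apply half_pos. }
  assert (B1 : INR (a - p) <= betaD D z zeta).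
  { unfold betaD. fold I1 I2 P. apply (log_bound _ (arc_len I1)); auto. apply Rmin_l. }
  assert (B2 : INR (b - p) <= betaD D z zeta).
  { unfold betaD. fold I1 I2 P. apply (log_bound _ (arc_len I2)); auto. apply Rmin_r. }
  rewrite S_INR in C1, C2.
  replace (ln (f z) - ln (f zeta)) with ((ln (f z) - ln (f (pointT P))) - (ln (f zeta) - ln (f (pointT P)))) by ring.
  eapply Rle_trans; [apply Rabs_triang|]. rewrite Rabs_Ropp.
  nra.
Qed.

Lemma ratio_facts (c r p : R) : 0 < p -> (c < r / p -> c * p < r) /\ (r / p <= 1 -> r <= p).
Proof.
  intros Hp. assert (E : p * / p = 1) by (field; lra).
  pose proof (Rinv_0_lt_compat p Hp). unfold Rdiv.
  split; intros H0; replace r with (r * / p * p) by (field; lra); nra.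
Qed.

Lemma modulus_0 : modulus (0, 0) = 0.
Proof. unfold modulus; simpl. replace (0 * (0 * 1) + 0 * (0 * 1)) with 0 by ring. apply sqrt_0. Qed.

Lemma Iz_in_I D : dyadic_grid D -> forall I z, D I -> in_T (3/4) I z ->
  arc_sub (Iz D z) I /\ arc_len I / 2 <= arc_len (Iz D z).
Proof.
  intros HD I z HI HzI.
  pose proof HzI as [Hd [[R1 R2] Hn]].
  destruct (Iz_spec D HD z Hd) as [HJ HzJ]. set (J := Iz D z) in *.
  pose proof HzJ as [_ [[Q1 Q2] Hn']].
  destruct (grid_pow D HD J HJ) as [a Ha].
  destruct (grid_pow D HD I HI) as [b Hb].
  pose proof (half_pos a). pose proof (half_pos b).
  destruct (ratio_facts (1 - 3/4) (1 - modulus z) (arc_len I) ltac:(lra)) as [F1 F2].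
  destruct (ratio_facts (1 - 1/2) (1 - modulus z) (arc_len J) ltac:(lra)) as [G1 G2].
  specialize (F1 R1). specialize (F2 R2). specialize (G1 Q1). specialize (G2 Q2).
  assert (ba : (b <= a)%nat).
  { destruct (Nat.le_gt_cases b a) as [h|h]; auto. exfalso.
    pose proof (half_anti (S a) b h). simpl in H1. lra. }
  assert (ab : (a <= S b)%nat).
  { destruct (Nat.le_gt_cases a (S b)) as [h|h]; auto. exfalso.
    pose proof (half_anti (S (S b)) a h). simpl in H1. lra. }
  assert (LJI : arc_len J <= arc_len I) by (rewrite Ha, Hb; apply half_anti; auto).
  split.
  - destruct (classic (z = (0, 0))) as [h|h].
    + subst z. rewrite modulus_0 in F2. pose proof (grid_valid D HD I HI) as [_ V].
      apply (full_sub D HD); auto. lra.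
    + destruct Hn as [h'|Hn]; [congruence|]. destruct Hn' as [h'|Hn']; [congruence|].
      apply (nest D HD J I HJ HI LJI (normalize z)); auto.
  - rewrite Ha, Hb. pose proof (half_anti a (S b) ab). simpl in H1. lra.
Qed.

Lemma dir21 (D : arc -> Prop) (f : pt -> R) :
  dyadic_grid D -> (forall z, in_disc z -> 0 < f z) ->
  (exists L, forall z zeta, in_disc z -> in_disc zeta ->
      Rabs (ln (f z) - ln (f zeta)) <= L * (1 + betaD D z zeta)) ->
  (exists C, 1 <= C /\
      forall I, D I -> forall z zeta, in_T (3/4) I z -> in_T (3/4) I zeta ->
        f z <= C * f zeta).
Proof.
  intros HD Hf [L HL]. exists (exp (2 * Rabs L)). split.
  { pose proof (exp_ineq1_le (2 * Rabs L)). pose proof (Rabs_pos L). lra. }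
  intros I HI z zeta Hz Hzeta.
  pose proof (proj1 Hz) as Dz. pose proof (proj1 Hzeta) as Dzeta.
  destruct (Iz_in_I D HD I z HI Hz) as [S1 M1].
  destruct (Iz_in_I D HD I zeta HI Hzeta) as [S2 M2].
  destruct (Iz_spec D HD z Dz) as [HJ1 _]. destruct (Iz_spec D HD zeta Dzeta) as [HJ2 _].
  destruct (PD_spec D HD _ _ HJ1 HJ2) as [HP [P1 [P2 Pmin]]].
  set (J1 := Iz D z) in *. set (J2 := Iz D zeta) in *. set (P := PD D J1 J2) in *.
  assert (PI : arc_len P <= arc_len I).
  { apply arc_len_le; auto; try (eapply grid_valid; eauto). }
  assert (JP : arc_len J1 <= arc_len P).
  { apply arc_len_le; auto; try (eapply grid_valid; eauto). }
  pose proof (grid_valid D HD I HI) as [VI _].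
  set (m := Rmin (arc_len J1) (arc_len J2)).
  assert (mJ : m <= arc_len J1) by apply Rmin_l.
  assert (mI : arc_len I / 2 <= m) by (apply Rmin_glb; auto).
  assert (Hr1 : 1 <= arc_len P / m).
  { unfold Rdiv. assert (m * / m = 1) by (field; lra). pose proof (Rinv_0_lt_compat m ltac:(lra)). nra. }
  assert (Hr2 : arc_len P / m <= 2).
  { unfold Rdiv. assert (m * / m = 1) by (field; lra). pose proof (Rinv_0_lt_compat m ltac:(lra)). nra. }
  assert (Hb : 0 <= betaD D z zeta <= 1).
  { unfold betaD. fold J1 J2 P m. unfold log2. pose proof ln2_pos.
    pose proof (ln_le' 1 _ ltac:(lra) Hr1). pose proof (ln_le' (arc_len P / m) 2 ltac:(lra) Hr2).
    rewrite ln_1 in H0. split.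
    - unfold Rdiv. apply Rmult_le_pos; auto. left; apply Rinv_0_lt_compat; auto.
    - apply Rmult_le_reg_r with (ln 2); auto. unfold Rdiv. rewrite Rmult_assoc, Rinv_l by lra. lra. }
  specialize (HL z zeta Dz Dzeta).
  assert (HL2 : L * (1 + betaD D z zeta) <= 2 * Rabs L).
  { pose proof (Rle_abs L). pose proof (Rabs_pos L). nra. }
  assert (Hle : ln (f z) <= ln (f zeta) + 2 * Rabs L).
  { pose proof (Rle_abs (ln (f z) - ln (f zeta))). lra. }
  pose proof (Hf z Dz). pose proof (Hf zeta Dzeta).
  rewrite <- (exp_ln (f z)) by auto. rewrite <- (exp_ln (f zeta)) by auto.
  rewrite <- exp_plus, Rplus_comm.
  destruct (Rle_lt_or_eq_dec _ _ Hle) as [h|h].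
  - left. apply exp_increasing. lra.
  - rewrite h. right. reflexivity.
Qed.

Theorem mainTheorem7 (D : arc -> Prop) (f : pt -> R) :
  dyadic_grid D ->
  (forall z, in_disc z -> 0 < f z) ->
  ((exists C, 1 <= C /\
      forall I, D I -> forall z zeta, in_T (3/4) I z -> in_T (3/4) I zeta ->
        f z <= C * f zeta)
   <->
   (exists L, forall z zeta, in_disc z -> in_disc zeta ->
      Rabs (ln (f z) - ln (f zeta)) <= L * (1 + betaD D z zeta))).
Proof.
  intros HD Hf. split; [apply dir12 | apply dir21]; auto.
Qed.
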